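(* For every nonempty face $F$ of $V_0$, the codimension of $F$ in $\mathcal F$ equals $\operatorname{genus}(\phi(F))$.
   Context: Let $\mathcal M$ be a regular matroid on a finite ground set $E$, represented by a totally unimodular matrix $M$ with columns $c_e$; $\mathcal F=\ker M\subseteq\mathbb R^E$ with Euclidean inner product, $\Lambda=\ker M\cap\mathbb Z^E$, $V_0=\{x\in\mathcal F:\|x\|\le\|x-\lambda\|\ \forall\lambda\in\Lambda\}$. A circuit in $\Lambda$ is a flow with coordinates in $\{-1,0,1\}$ whose support is a circuit (minimal dependent set of columns) of $\mathcal M$; $\Xi$ is the set of these; $F_\gamma=\{x\in\mathcal F:2\langle x,\gamma\rangle=\|\gamma\|^2\}$. For a nonempty face $F$ of $V_0$, $\mathcal U(F)=\{\gamma\in\Xi:F\subseteq F_\gamma\}$ and $\phi(F)=(S,\varepsilon)$ with $S=\bigcup_{\gamma\in\mathcal U(F)}\operatorname{supp}\gamma$ and $\varepsilon_e=\operatorname{sgn}\gamma_e$ for any $\gamma\in\mathcal U(F)$ containing $e$ (well defined). The genus of $(S,\varepsilon)$ is $\dim\ker M_S$, $M_S$ being the submatrix of columns indexed by $S$. *)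

(* Defs.v *)
From HB Require Import structures.
From mathcomp Require Import all_boot all_order all_algebra.
From mathcomp Require Import boolp reals.
Set Implicit Arguments. Unset Strict Implicit. Unset Printing Implicit Defensive.
Import Order.TTheory GRing.Theory Num.Theory.
Local Open Scope ring_scope.

Section Defs.
Variables (R : realType) (m n : nat).
(* Ground set E = 'I_n; M : 'M_(m,n) with columns c_e = col e M.
   Vectors of R^E are row vectors 'rV[R]_n, so M x = 0 reads x *m M^T = 0. *)

Definition dotp (x y : 'rV[R]_n) : R := \sum_(e < n) x 0 e * y 0 e.
Definition normsq (x : 'rV[R]_n) : R := dotp x x.

Definition totally_unimodular (M : 'M[R]_(m, n)) : Prop :=
  forall (k : nat) (f : 'I_k -> 'I_m) (g : 'I_k -> 'I_n),
    injective f -> injective g ->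
    let d := \det (mxsub f g M) in d = 0 \/ d = 1 \/ d = -1.

Definition colsubS (M : 'M[R]_(m, n)) (S : {set 'I_n}) : 'M[R]_(m, #|S|) :=
  colsub (fun i : 'I_#|S| => enum_val i) M.

Definition in_flows (M : 'M[R]_(m, n)) (x : 'rV[R]_n) : Prop := x *m M^T = 0.
Definition dim_flows (M : 'M[R]_(m, n)) : nat := \rank (kermx M^T).

Definition in_lattice (M : 'M[R]_(m, n)) (x : 'rV[R]_n) : Prop :=
  in_flows M x /\ forall e, exists z : int, x 0 e = z%:~R.

Definition V0 (M : 'M[R]_(m, n)) (x : 'rV[R]_n) : Prop :=
  in_flows M x /\ forall l, in_lattice M l -> normsq x <= normsq (x - l).

(* matroid of the columns: S dependent iff the columns indexed by S are
   linearly dependent; circuits are minimal dependent sets *)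
Definition dependent (M : 'M[R]_(m, n)) (S : {set 'I_n}) : Prop :=
  ~~ row_free (colsubS M S)^T.
Definition is_circuit (M : 'M[R]_(m, n)) (S : {set 'I_n}) : Prop :=
  dependent M S /\ forall T : {set 'I_n}, T \proper S -> ~ dependent M T.

Definition supp (x : 'rV[R]_n) : {set 'I_n} := [set e | x 0 e != 0].

Definition circuit_flow (M : 'M[R]_(m, n)) (g : 'rV[R]_n) : Prop :=
  in_flows M g /\ (forall e, g 0 e = 0 \/ g 0 e = 1 \/ g 0 e = -1) /\
  is_circuit M (supp g).

Definition Fgamma (M : 'M[R]_(m, n)) (g x : 'rV[R]_n) : Prop :=
  in_flows M x /\ 2 * dotp x g = normsq g.

(* faces of a convex set V: V itself or V ∩ supporting hyperplane
   (c = 0, b = 0 gives V itself); for a polytope these are all faces *)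
Definition is_face (V F : 'rV[R]_n -> Prop) : Prop :=
  exists (c : 'rV[R]_n) (b : R),
    (forall x, V x -> dotp c x <= b) /\
    (forall x, F x <-> (V x /\ dotp c x = b)).

Definition Ucirc (M : 'M[R]_(m, n)) (F : 'rV[R]_n -> Prop) (g : 'rV[R]_n) : Prop :=
  circuit_flow M g /\ forall x, F x -> Fgamma M g x.

(* first component S of phi(F) = (S, eps) *)
Definition phiS (M : 'M[R]_(m, n)) (F : 'rV[R]_n -> Prop) : {set 'I_n} :=
  [set e | `[< exists g, Ucirc M F g /\ g 0 e != 0 >] ].

(* sign component eps of phi(F) (value on e \notin S irrelevant: 0) *)
Definition phiEps (M : 'M[R]_(m, n)) (F : 'rV[R]_n -> Prop) (e : 'I_n) : R :=
  if pselect (exists g, Ucirc M F g /\ g 0 e != 0) is left P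
  then Num.sg ((projT1 (cid P)) 0 e) else 0.

Definition genus (M : 'M[R]_(m, n)) (S : {set 'I_n}) (eps : 'I_n -> R) : nat :=
  \rank (kermx (colsubS M S)^T).

(* d = dimension of the affine hull of F *)
Definition affine_dim (F : 'rV[R]_n -> Prop) (d : nat) : Prop :=
  exists2 x0, F x0 &
    (exists U : 'M[R]_n, \rank U = d /\ forall x, F x -> (x - x0 <= U)%MS) /\
    (forall U : 'M[R]_n, (forall x, F x -> (x - x0 <= U)%MS) -> (d <= \rank U)%N).

Definition codim_in_flows (M : 'M[R]_(m, n)) (F : 'rV[R]_n -> Prop) (c : nat) : Prop :=
  exists d, affine_dim F d /\ (d + c)%N = dim_flows M.

End Defs.

(* Main.v *)
Require Import Defs.
From HB Require Import structures.
From mathcomp Require Import all_boot all_order all_algebra.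
From mathcomp Require Import boolp reals.
From mathcomp Require Import zify ring lra.
From Stdlib Require Import Classical.
Set Implicit Arguments. Unset Strict Implicit. Unset Printing Implicit Defensive.
Import Order.TTheory GRing.Theory Num.Theory.
Local Open Scope ring_scope.


Section Basics.
Variables (R : realType) (m n : nat).
Implicit Types (x y z v : 'rV[R]_n).

Lemma dotpE x y : dotp x y = (x *m y^T) 0 0.
Proof. by rewrite /dotp !mxE; apply: eq_bigr => e _; rewrite mxE. Qed.

Lemma dotpC x y : dotp x y = dotp y x.
Proof. by rewrite /dotp; apply: eq_bigr => e _; rewrite mulrC. Qed.

Lemma dotpDr x y z : dotp x (y + z) = dotp x y + dotp x z.
Proof. by rewrite /dotp -big_split; apply: eq_bigr => e _; rewrite mxE mulrDr. Qed.

Lemma dotpZr x a y : dotp x (a *: y) = a * dotp x y.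
Proof. by rewrite /dotp mulr_sumr; apply: eq_bigr => e _; rewrite mxE mulrCA. Qed.

Lemma dotpNr x y : dotp x (- y) = - dotp x y.
Proof. by rewrite -scaleN1r dotpZr mulN1r. Qed.

Lemma dotpBr x y z : dotp x (y - z) = dotp x y - dotp x z.
Proof. by rewrite dotpDr dotpNr. Qed.

Lemma dotpDl x y z : dotp (y + z) x = dotp y x + dotp z x.
Proof. by rewrite !(dotpC _ x) dotpDr. Qed.

Lemma dotpZl x a y : dotp (a *: y) x = a * dotp y x.
Proof. by rewrite !(dotpC _ x) dotpZr. Qed.

Lemma dotpNl x y : dotp (- y) x = - dotp y x.
Proof. by rewrite !(dotpC _ x) dotpNr. Qed.

Lemma dotpBl x y z : dotp (y - z) x = dotp y x - dotp z x.
Proof. by rewrite dotpDl dotpNl. Qed.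

Lemma dotp0r x : dotp x 0 = 0.
Proof. by rewrite /dotp big1 // => e _; rewrite mxE mulr0. Qed.

Lemma dotp_sumr I (r : seq I) (P : pred I) (F : I -> 'rV[R]_n) x :
  dotp x (\sum_(i <- r | P i) F i) = \sum_(i <- r | P i) dotp x (F i).
Proof.
by apply: (big_morph (dotp x)); [exact: dotpDr | exact: dotp0r].
Qed.

Lemma normsq_ge0 x : 0 <= normsq x.
Proof. by rewrite /normsq /dotp sumr_ge0 // => e _; rewrite -expr2 sqr_ge0. Qed.

Lemma normsq_eq0 x : normsq x = 0 -> x = 0.
Proof.
rewrite /normsq /dotp => /eqP; rewrite psumr_eq0 => [/allP H|e _]; last first.
  by rewrite -expr2 sqr_ge0.
apply/rowP => e; rewrite mxE; have := H e (mem_index_enum e).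
by rewrite /= mulf_eq0 orbb => /eqP.
Qed.

Lemma normsqB x l : normsq (x - l) = normsq x - 2 * dotp x l + normsq l.
Proof.
rewrite /normsq dotpBl !dotpBr (dotpC l x); ring.
Qed.

Definition l1 x : R := \sum_(e < n) `|x 0 e|.

Lemma l1_ge0 x : 0 <= l1 x.
Proof. by apply: sumr_ge0. Qed.

End Basics.


Section PM.
Variables (R : realType) (m n : nat).

Definition Pm (S : {set 'I_n}) : 'M[R]_(#|S|, n) :=
  \matrix_(i, e) (enum_val i == e)%:R.

Lemma colsubS_E (M : 'M[R]_(m, n)) (S : {set 'I_n}) : colsubS M S = M *m (Pm S)^T.
Proof.
apply/matrixP => r i; rewrite !mxE (bigD1 (enum_val i)) //= big1.
  by rewrite !mxE eqxx mulr1 addr0.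
by move=> e /negPf ne; rewrite !mxE eq_sym ne mulr0.
Qed.

Lemma PPt (S : {set 'I_n}) : Pm S *m (Pm S)^T = 1%:M.
Proof.
apply/matrixP => i j; rewrite !mxE (bigD1 (enum_val i)) //= big1.
  rewrite !mxE eqxx mul1r addr0 (inj_eq enum_val_inj) eq_sym.
  by case: (i == j).
by move=> e /negPf ne; rewrite !mxE eq_sym ne mul0r.
Qed.

Lemma Pm_free (S : {set 'I_n}) : row_free (Pm S).
Proof.
apply/row_freeP; exists (Pm S)^T; exact: PPt.
Qed.

Lemma PtP_entry (S : {set 'I_n}) (v : 'rV[R]_n) e :
  (v *m (Pm S)^T *m Pm S) 0 e = if e \in S then v 0 e else 0.
Proof.
rewrite mxE.
case: ifP => eS.
  rewrite (bigD1 (enum_rank_in eS e)) //= big1.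
    rewrite !mxE enum_rankK_in // eqxx mulr1 addr0.
    rewrite (bigD1 e) //= big1; first by rewrite !mxE enum_rankK_in // eqxx mulr1 addr0.
    by move=> e' /negPf ne; rewrite !mxE enum_rankK_in // eq_sym ne mulr0.
  move=> i ni; rewrite !mxE.
  have -> : (enum_val i == e) = false.
    apply/negP => /eqP E; move/negP: ni; apply; apply/eqP.
    by apply: enum_val_inj; rewrite E enum_rankK_in.
  by rewrite mulr0.
rewrite big1 // => i _; rewrite !mxE.
have -> : (enum_val i == e) = false.
  by apply/negP => /eqP E; move: (enum_valP i); rewrite E eS.
by rewrite mulr0.
Qed.

Lemma supp_PtP (S : {set 'I_n}) (v : 'rV[R]_n) : supp v \subset S -> v *m (Pm S)^T *m Pm S = v.
Proof.
move=> /subsetP sS; apply/rowP => e; rewrite (PtP_entry S v e).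
case: ifP => // eS; apply/eqP; apply/negPn/negP => ne.
by move: (sS e); rewrite inE eq_sym ne eS => /(_ isT).
Qed.

Lemma supp_uP (S : {set 'I_n}) (u : 'rV[R]_#|S|) : supp (u *m Pm S) \subset S.
Proof.
apply/subsetP => e; rewrite inE mxE; apply: contraR => eS.
rewrite big1 // => i _; rewrite !mxE.
have -> : (enum_val i == e) = false.
  by apply/negP => /eqP E; move: (enum_valP i); rewrite E (negPf eS).
by rewrite mulr0.
Qed.

Lemma PtP_mul (S : {set 'I_n}) (u : 'rV[R]_#|S|) : u *m Pm S *m (Pm S)^T = u.
Proof. by rewrite -mulmxA PPt mulmx1. Qed.

Lemma colsubS_trE (M : 'M[R]_(m, n)) (S : {set 'I_n}) : (colsubS M S)^T = Pm S *m M^T.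
Proof. by rewrite colsubS_E trmx_mul trmxK. Qed.

Lemma dependentP (M : 'M[R]_(m, n)) (S : {set 'I_n}) :
  dependent M S <-> exists v, v != 0 /\ in_flows M v /\ supp v \subset S.
Proof.
rewrite /dependent colsubS_trE -kermx_eq0; split.
  move=> /negP nz.
  have [i ni] : exists i, row i (kermx (Pm S *m M^T)) != 0.
    case/boolP: [exists i, row i (kermx (Pm S *m M^T)) != 0] => [/existsP //|H].
    exfalso; apply: nz; apply/eqP/row_matrixP => i.
    by rewrite row0; apply/eqP; move/existsPn: H => /(_ i) /negPn.
  set u := row i _ in ni.
  have uk : u *m (Pm S *m M^T) = 0 by apply/sub_kermxP; exact: row_sub.
  exists (u *m Pm S); split; [|split].
  - by apply: contra ni => /eqP E; rewrite -(PtP_mul u) E mul0mx.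
  - by rewrite /in_flows -mulmxA.
  - exact: supp_uP.
move=> [v [nv [fv sv]]]; apply/negP => /eqP K.
have : (v *m (Pm S)^T <= kermx (Pm S *m M^T))%MS.
  by apply/sub_kermxP; rewrite mulmxA supp_PtP.
rewrite K submx0 => /eqP E.
by move/negP: nv; apply; rewrite -(supp_PtP sv) E mul0mx.
Qed.

End PM.


Section Cramer.
Variables (R : realType).

Definition repl k (X : 'M[R]_k) (j : 'I_k) (x : 'rV[R]_k) : 'M[R]_k :=
  \matrix_(r, c) if r == j then x 0 c else X r c.

Lemma cofactor_repl k (X : 'M[R]_k) j x c :
  cofactor (repl X j x) j c = cofactor X j c.
Proof.
rewrite /cofactor; congr (_ * _); congr (\det _).
apply/matrixP => r s; rewrite !mxE.
by rewrite eq_sym (negPf (neq_lift j r)).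
Qed.

Lemma det_repl k (X : 'M[R]_k) j x :
  \det (repl X j x) = \sum_c x 0 c * cofactor X j c.
Proof.
rewrite (expand_det_row _ j); apply: eq_bigr => c _.
by rewrite cofactor_repl mxE eqxx.
Qed.

Lemma row_cof k (X : 'M[R]_k) j l :
  \sum_c X l c * cofactor X j c = if l == j then \det X else 0.
Proof.
case: eqP => [->|/eqP nlj]; first by rewrite (expand_det_row _ j).
have := det_repl X j (row l X).
under eq_bigr do rewrite mxE.
move=> <-; apply: (determinant_alternate nlj) => c.
by rewrite !mxE eqxx (negPf nlj).
Qed.

End Cramer.

Section L3.
Variables (R : realType) (m n : nat) (M : 'M[R]_(m, n)).

Definition pm1 (a : R) := a = 0 \/ a = 1 \/ a = -1.

Lemma pm1M a b : pm1 a -> pm1 b -> pm1 (a * b).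
Proof.
by move=> [->|[->|->]] [->|[->|->]]; rewrite /pm1;
  rewrite ?mul0r ?mulr0 ?mul1r ?mulr1 ?mulN1r ?mulrN1 ?opprK; auto.
Qed.

Lemma pm1N a : pm1 a -> pm1 (- a).
Proof. by move=> [->|[->|->]]; rewrite /pm1 ?oppr0 ?opprK; auto. Qed.

Lemma supp_scale (a : R) (y : 'rV[R]_n) : a != 0 -> supp (a *: y) = supp y.
Proof. by move=> a0; apply/setP => e; rewrite !inE mxE mulf_eq0 negb_or a0. Qed.

Lemma circuit_normalize (y : 'rV[R]_n) :
  totally_unimodular M -> in_flows M y -> is_circuit M (supp y) ->
  exists2 a : R, a != 0 & exists d, circuit_flow M d /\ y = a *: d.
Proof.
move=> TU fy [dC minC].
set C := supp y in dC minC.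
have [e0 e0C] : exists e0, e0 \in C.
  have [v [nv [_ sv]]] := (dependentP M C).1 dC.
  apply/set0Pn; apply: contra nv => /eqP C0; apply/eqP/rowP => e; rewrite mxE.
  apply/eqP/negPn/negP => ne; have : e \in supp v by rewrite inE.
  by move/(subsetP sv); rewrite C0 inE.
have y0nz : y 0 e0 != 0 by move: e0C; rewrite inE.
set y0 := y 0 e0.
set C' := C :\ e0.
have indep : ~ dependent M C' by apply: minC; exact: properD1.
have rfN : row_full (colsubS M C').
  move/negP: indep; rewrite /dependent negbK /row_free /row_full mxrank_tr.
  by [].
set k := #|C'|.
set g := fun j : 'I_k => enum_val j.
have ginj : injective g by apply: enum_val_inj.
set f := fullrankfun rfN.
have finj : injective f by apply: fullrankfun_inj.
set A := mxsub f g M.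
have AE : A = rowsub f (colsubS M C') by apply/matrixP => i j; rewrite !mxE.
have detA : \det A = 1 \/ \det A = -1.
  have : \det A != 0.
    by rewrite -unitfE -unitmxE AE; exact: fullrowsub_unit.
  by case: (TU k f g finj ginj) => [->|]; rewrite ?eqxx.
set t := y *m (Pm R C')^T.
have tE : forall j, t 0 j = y 0 (g j).
  move=> j; rewrite mxE (bigD1 (g j)) //= big1; first by rewrite !mxE eqxx mulr1 addr0.
  by move=> e /negPf ne; rewrite !mxE eq_sym ne mulr0.
have yout : forall e, e \notin C -> y 0 e = 0.
  by move=> e; rewrite inE negbK => /eqP.
have e0C' : e0 \notin C' by rewrite in_setD1 eqxx.
have eqn : forall r, \sum_j t 0 j * M r (g j) + y0 * M r e0 = 0.
  move=> r; have := congr1 (fun X : 'M[R]_(1, m) => X 0 r) fy; rewrite !mxE => E.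
  rewrite -[RHS]E (bigID (fun e => e \in C)) /= [X in _ = _ + X]big1; last first.
    by move=> e /yout ->; rewrite mul0r.
  rewrite addr0 (bigD1 e0) //= addrC; congr (_ + _); last by rewrite mxE.
  rewrite (eq_bigl (fun e => e \in C')); last by move=> e; rewrite in_setD1 andbC.
  rewrite (big_enum_val (fun e => y 0 e * M^T e r)) /=.
  by apply: eq_bigr => j _; rewrite tE mxE.
have key : forall j, \det (mxsub f (fun l => if l == j then e0 else g l) M) * y0
                     = - t 0 j * \det A.
  move=> j.
  set b : 'rV[R]_k := \row_c M (f c) e0.
  have -> : mxsub f (fun l => if l == j then e0 else g l) M = (repl A^T j b)^T.
    by apply/matrixP => c r; rewrite !mxE; case: (r == j).
  rewrite det_tr det_repl mulr_suml.
  have -> : \sum_c b 0 c * cofactor A^T j c * y0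
            = \sum_c - (\sum_l t 0 l * A^T l c) * cofactor A^T j c.
    apply: eq_bigr => c _; rewrite mxE mulrAC; congr (_ * _).
    have E := eqn (f c).
    have -> : \sum_l t 0 l * A^T l c = \sum_l t 0 l * M (f c) (g l).
      by apply: eq_bigr => l _; rewrite !mxE.
    by rewrite mulrC; apply/eqP; rewrite -addr_eq0 addrC E.
  under eq_bigr do rewrite mulNr mulr_suml.
  rewrite sumrN mulNr; congr (- _).
  rewrite exchange_big /=.
  under eq_bigr do (under eq_bigr do rewrite -mulrA; rewrite -mulr_sumr row_cof).
  rewrite (bigD1 j) //= eqxx big1 ?addr0 ?det_tr //.
  by move=> l /negPf ->; rewrite mulr0.
have pmt : forall j, pm1 (t 0 j / y0).
  move=> j.
  set gj := fun l : 'I_k => if l == j then e0 else g l.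
  have gjinj : injective gj.
    move=> l1 l2; rewrite /gj.
    case: (eqVneq l1 j) => [->|n1]; case: (eqVneq l2 j) => [->|n2] //.
    - by move=> E; move: e0C'; rewrite E; move: (enum_valP l2) => ->.
    - by move=> E; move: e0C'; rewrite -E; move: (enum_valP l1) => ->.
    - exact: ginj.
  have HAj := TU k f gj finj gjinj; simpl in HAj.
  have kj := key j.
  have tj : t 0 j / y0 = - \det (mxsub f gj M) * \det A.
    case: detA => dA; rewrite dA in kj *.
    - have -> : t 0 j = - (\det (mxsub f gj M) * y0) by rewrite kj mulr1 opprK.
      by rewrite mulr1 !mulNr mulfK.
    - have -> : t 0 j = \det (mxsub f gj M) * y0 by rewrite kj mulrN1 opprK.
      by rewrite mulfK // mulrN1 opprK.
  rewrite tj; apply: pm1M; first by apply: pm1N.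
  by case: detA => ->; rewrite /pm1; auto.
exists y0 => //.
exists (y0^-1 *: y); split; last by rewrite scalerA mulfV // scale1r.
split; [|split].
- by rewrite /in_flows -scalemxAl fy scaler0.
- move=> e; rewrite mxE.
  case: (eqVneq e e0) => [->|ne]; first by rewrite mulVf //; auto.
  case: (boolP (e \in C')) => eC'.
    have := pmt (enum_rank_in eC' e); rewrite tE /g enum_rankK_in // mulrC //.
  rewrite yout ?mulr0 /pm1; auto.
  by move: eC'; rewrite in_setD1 ne.
- by rewrite supp_scale ?invr_eq0 //; split.
Qed.

End L3.


Section Decomp.
Variables (R : realType) (m n : nat) (M : 'M[R]_(m, n)).

Definition conf (d y : 'rV[R]_n) := forall e, d 0 e != 0 -> 0 < d 0 e * y 0 e.

Lemma normr_case (x : R) : (`|x| = x /\ 0 <= x) \/ (`|x| = - x /\ x < 0).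
Proof.
by case: (lerP 0 x) => h; [left; rewrite ger0_norm | right; rewrite ltr0_norm].
Qed.

Lemma conf_trans a b c : conf a b -> conf b c -> conf a c.
Proof.
move=> ab bc e ae; have h1 := ab e ae.
have be : b 0 e != 0 by apply: contraTneq h1 => ->; rewrite mulr0 ltxx.
have h2 := bc e be.
have := mulr_gt0 h1 h2.
rewrite (_ : a 0 e * b 0 e * (b 0 e * c 0 e) = a 0 e * c 0 e * (b 0 e * b 0 e)); last by ring.
by rewrite pmulr_lgt0 // -expr2 exprn_even_gt0.
Qed.

Lemma conf_supp d y : conf d y -> supp d \subset supp y.
Proof.
move=> c; apply/subsetP => e; rewrite !inE => de; have := c e de.
by apply: contraTneq => ->; rewrite mulr0 ltxx.
Qed.

Lemma conf_refl y : conf y y.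
Proof. by move=> e ye; rewrite -expr2 exprn_even_gt0. Qed.


Lemma exists_min_seq (I : eqType) (s : seq I) (f : I -> R) :
  s != [::] -> exists2 i, i \in s & forall j, j \in s -> f i <= f j.
Proof.
elim: s => // a s IH _.
case: (eqVneq s [::]) => [->|/IH [i iis Hi]].
  by exists a; rewrite ?inE // => j; rewrite inE => /eqP ->.
case: (lerP (f a) (f i)) => h.
  exists a; first exact: mem_head.
  by move=> j; rewrite inE => /orP [/eqP ->//|/Hi]; apply: le_trans.
exists i; first by rewrite inE iis orbT.
by move=> j; rewrite inE => /orP [/eqP ->|/Hi //]; apply: ltW.
Qed.

Lemma exists_min_set (A : {set 'I_n}) (f : 'I_n -> R) (e0 : 'I_n) :
  e0 \in A -> exists2 i, i \in A & forall j, j \in A -> f i <= f j.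
Proof.
move=> eA; have : enum A != [::].
  by apply/eqP => E; move: (mem_enum A e0); rewrite E eA.
move=> /(exists_min_seq f) [i]; rewrite mem_enum => iA Hi.
by exists i => // j jA; apply: Hi; rewrite mem_enum.
Qed.

Lemma supp0 (z : 'rV[R]_n) : supp z = set0 -> z = 0.
Proof.
move=> E; apply/rowP => e; rewrite mxE; apply/eqP/negPn/negP => ne.
have : e \in supp z by rewrite inE.
by rewrite E inE.
Qed.

Lemma suppN0 (z : 'rV[R]_n) : z != 0 -> exists e, e \in supp z.
Proof.
move=> nz; have : supp z != set0 by apply: contra nz => /eqP /supp0 ->.
by case/set0Pn => e ez; exists e.
Qed.

Lemma circuit_flowN d : circuit_flow M d -> circuit_flow M (- d).
Proof.
move=> [fd [pd cd]]; split; [|split].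
- by rewrite /in_flows mulNmx fd oppr0.
- by move=> e; rewrite mxE; apply: pm1N; apply: pd.
- by rewrite -scaleN1r supp_scale // oppr_eq0 oner_eq0.
Qed.

Lemma elem (TU : totally_unimodular M) k :
  forall z, (#|supp z| <= k)%N -> in_flows M z -> z != 0 ->
  exists d, circuit_flow M d /\ conf d z.
Proof.
elim: k => [|k IH] z sz fz nz.
  have E : supp z = set0 by apply: cards0_eq; apply/eqP; rewrite -leqn0.
  by move: nz; rewrite (supp0 E) eqxx.
case: (classic (is_circuit M (supp z))) => [cz|ncz].
  have [a a0 [d [cd zE]]] := circuit_normalize TU fz cz.
  case: (lerP 0 a) => ha.
    exists d; split => // e de; rewrite zE mxE.
    rewrite mulrCA -expr2 mulr_gt0 // ?exprn_even_gt0 //.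
    by rewrite lt_def a0.
  exists (- d); split; first exact: circuit_flowN.
  move=> e; rewrite zE !mxE oppr_eq0 => de.
  rewrite mulNr mulrCA -mulNr -expr2 mulr_gt0 ?exprn_even_gt0 //.
  by rewrite oppr_gt0.
have dz : dependent M (supp z) by apply/dependentP; exists z; split => //.
have [T [pT dT]] : exists T : {set 'I_n}, T \proper supp z /\ dependent M T.
  apply: NNPP => H; apply: ncz; split => // T pT dT; apply: H; exists T; done.
have [w [nw [fw sw]]] := (dependentP M T).1 dT.
have [e0 e0w] := suppN0 nw.
have [e1 e1w Hmin] := exists_min_set (fun e => `|z 0 e / w 0 e|) e0w.
have [sTz [e2 e2z e2T]] := properP pT.
have w1 : w 0 e1 != 0 by move: e1w; rewrite inE.
set tt := z 0 e1 / w 0 e1.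
set z' := z - tt *: w.
have z'e : forall e, z' 0 e = z 0 e - tt * w 0 e by move=> e; rewrite !mxE.
have cz' : conf z' z.
  move=> e; rewrite z'e => ne.
  case: (eqVneq (w 0 e) 0) => [w0|we].
    by rewrite w0 mulr0 subr0 in ne *; rewrite -expr2 exprn_even_gt0.
  have ew : e \in supp w by rewrite inE.
  have ze : z 0 e != 0.
    by move: (subsetP sTz e (subsetP sw e ew)); rewrite inE.
  have H := Hmin e ew; rewrite /= -/tt in H.
  have H2 : `|tt * w 0 e| <= `|z 0 e|.
    rewrite normrM; have := ler_wpM2r (normr_ge0 (w 0 e)) H.
    by rewrite [`|z 0 e / _|]normrM normfV mulfVK // normr_eq0.
  have H3 : tt * w 0 e * z 0 e <= `|z 0 e| * `|z 0 e|.
    apply: le_trans (ler_norm _) _; rewrite normrM.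
    by apply: ler_wpM2r.
  have H4 : `|z 0 e| * `|z 0 e| = z 0 e * z 0 e.
    by rewrite -!expr2 real_normK // num_real.
  rewrite lt_def mulf_neq0 //= mulrBl; lra.
have z'0 : z' 0 e1 = 0 by rewrite z'e /tt mulfVK // subrr.
have sz' : supp z' \subset supp z :\ e1.
  apply/subsetP => e ez; rewrite in_setD1; apply/andP; split.
    by apply: contraTneq ez => ->; rewrite inE z'0 eqxx.
  exact: (subsetP (conf_supp cz')).
have nz' : z' != 0.
  apply/eqP => /rowP /(_ e2); rewrite z'e mxE.
  have -> : w 0 e2 = 0.
    by apply/eqP; apply: contraNT e2T => we; apply: (subsetP sw); rewrite inE.
  by rewrite mulr0 subr0 => /eqP; move: e2z; rewrite inE => /negP.
have fz' : in_flows M z'.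
  by rewrite /in_flows mulmxBl fz -scalemxAl fw scaler0 subr0.
have sz'k : (#|supp z'| <= k)%N.
  have e1z : e1 \in supp z by apply: (subsetP sTz); apply: (subsetP sw).
  have := cardsD1 e1 (supp z); rewrite e1z => E.
  apply: leq_trans (subset_leq_card sz') _.
  by rewrite -ltnS -add1n -E.
have [d [cd cdz']] := IH z' sz'k fz' nz'.
by exists d; split => //; apply: conf_trans cz'.
Qed.

End Decomp.


Section Decomp2.
Variables (R : realType) (m n : nat) (M : 'M[R]_(m, n)).

Lemma pm1_sgn (d y : R) : pm1 d -> d != 0 -> 0 < d * y -> y = d * `|y|.
Proof.
move=> [->|[->|->]]; rewrite ?eqxx // => _.
  by rewrite !mul1r => h; rewrite ger0_norm // ltW.
by rewrite !mulN1r oppr_gt0 => h; rewrite ltr0_norm // opprK.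
Qed.

Lemma circuit_nonempty (d : 'rV[R]_n) : circuit_flow M d -> exists e, e \in supp d.
Proof.
move=> [_ [_ [dd _]]]; have [v [nv [_ sv]]] := (dependentP M _).1 dd.
have [e ev] := suppN0 nv; exists e; exact: (subsetP sv).
Qed.

Definition decomp_of (s : seq (R * 'rV[R]_n)) (y : 'rV[R]_n) :=
  y = \sum_(p <- s) p.1 *: p.2 /\
  forall p, p \in s -> 0 <= p.1 /\ circuit_flow M p.2 /\ conf p.2 y.

Lemma decomp (TU : totally_unimodular M) k :
  forall y, (#|supp y| <= k)%N -> in_flows M y -> exists s, decomp_of s y.
Proof.
elim: k => [|k IH] y sy fy.
  have E : supp y = set0 by apply: cards0_eq; apply/eqP; rewrite -leqn0.
  by exists [::]; split => //; rewrite big_nil (supp0 E).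
case: (eqVneq y 0) => [->|ny]; first by exists [::]; split => //; rewrite big_nil.
have [d [cd cdy]] := elem TU sy fy ny.
have [e0 e0d] := circuit_nonempty cd.
have [e1 e1d Hmin] := exists_min_set (fun e => `|y 0 e|) e0d.
have pd := cd.2.1.
have yE : forall e, e \in supp d -> y 0 e = d 0 e * `|y 0 e|.
  move=> e; rewrite inE => de; apply: pm1_sgn => //; exact: cdy.
set a := `|y 0 e1|.
set y' := y - a *: d.
have y'e : forall e, y' 0 e = y 0 e - a * d 0 e by move=> e; rewrite !mxE.
have d2 : forall e, e \in supp d -> d 0 e * d 0 e = 1.
  move=> e; rewrite inE; case: (pd e) => [->|[->|->]]; rewrite ?eqxx //.
    by rewrite mulr1. by rewrite mulrNN mulr1.
have cy' : conf y' y.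
  move=> e; rewrite y'e => ne.
  case: (boolP (e \in supp d)) => ed; last first.
    move: ed; rewrite inE negbK => /eqP d0.
    by rewrite d0 mulr0 subr0 in ne *; rewrite -expr2 exprn_even_gt0.
  have H := Hmin e ed; rewrite /= -/a in H.
  have ye : y 0 e != 0.
    by move: (subsetP (conf_supp cdy) e ed); rewrite inE.
  rewrite lt_def mulf_neq0 //=.
  rewrite (yE e ed) in ne *.
  have -> : (d 0 e * `|y 0 e| - a * d 0 e) * (d 0 e * `|y 0 e|)
     = (d 0 e * d 0 e) * (`|y 0 e| * (`|y 0 e| - a)) by ring.
  by rewrite d2 // mul1r mulr_ge0 // subr_ge0.
have y'0 : y' 0 e1 = 0 by rewrite y'e (yE e1 e1d) -/a mulrC subrr.
have sy' : supp y' \subset supp y :\ e1.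
  apply/subsetP => e ez; rewrite in_setD1; apply/andP; split.
    by apply: contraTneq ez => ->; rewrite inE y'0 eqxx.
  exact: (subsetP (conf_supp cy')).
have sy'k : (#|supp y'| <= k)%N.
  have e1z : e1 \in supp y by apply: (subsetP (conf_supp cdy)).
  have := cardsD1 e1 (supp y); rewrite e1z => E.
  apply: leq_trans (subset_leq_card sy') _.
  by rewrite -ltnS -add1n -E.
have fy' : in_flows M y'.
  by rewrite /in_flows mulmxBl fy -scalemxAl cd.1 scaler0 subr0.
have [s [ys Hs]] := IH y' sy'k fy'.
exists ((a, d) :: s); split.
  by rewrite big_cons /= -ys /y' addrC subrK.
move=> p; rewrite inE => /orP [/eqP -> /=|ps].
  by split => //; apply: normr_ge0.
have [h1 [h2 h3]] := Hs p ps; split => //; split => //.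
exact: conf_trans h3 cy'.
Qed.

Lemma decomp_abs s y : decomp_of s y ->
  forall e, `|y 0 e| = \sum_(p <- s) p.1 * `|p.2 0 e|.
Proof.
move=> [ys Hs] e.
have yee : y 0 e = \sum_(p <- s) p.1 * p.2 0 e.
  by rewrite {1}ys summxE; apply: eq_bigr => p _; rewrite mxE.
case: (eqVneq (y 0 e) 0) => [y0|ny].
  rewrite y0 normr0 big_seq big1 // => p ps.
  have [_ [_ c]] := Hs p ps.
  case: (eqVneq (p.2 0 e) 0) => [->|pe]; first by rewrite normr0 mulr0.
  by have := c e pe; rewrite y0 mulr0 ltxx.
have key : forall p, p \in s -> `|p.2 0 e| * `|y 0 e| = p.2 0 e * y 0 e.
  move=> p ps; have [_ [_ c]] := Hs p ps.
  case: (eqVneq (p.2 0 e) 0) => [->|pe]; first by rewrite normr0 !mul0r.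
  by rewrite -normrM gtr0_norm // c.
have nye : `|y 0 e| != 0 by rewrite normr_eq0.
apply: (mulIf nye); rewrite mulr_suml.
rewrite big_seq (eq_bigr (fun p : R * 'rV[R]_n => p.1 * p.2 0 e * y 0 e)); last first.
  by move=> p ps; rewrite -[LHS]mulrA key // mulrA.
by rewrite -big_seq -mulr_suml -yee -!expr2 real_normK ?num_real.
Qed.

Lemma l1_decomp s y : decomp_of s y -> l1 y = \sum_(p <- s) p.1 * l1 p.2.
Proof.
move=> D; rewrite /l1 (eq_bigr _ (fun e _ => decomp_abs D e)) exchange_big /=.
by apply: eq_bigr => p _; rewrite mulr_sumr.
Qed.

Lemma l1_circ d : circuit_flow M d -> l1 d = normsq d.
Proof.
move=> [_ [pd _]]; rewrite /l1 /normsq /dotp; apply: eq_bigr => e _.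
by case: (pd e) => [->|[->|->]]; rewrite ?normr0 ?mulr0 ?normr1 ?mulr1 // normrN1 mulrNN mulr1.
Qed.

Definition circ_ok (x : 'rV[R]_n) := forall d, circuit_flow M d -> 2 * dotp x d <= normsq d.

Lemma dotp_decomp s y x : decomp_of s y -> dotp x y = \sum_(p <- s) p.1 * dotp x p.2.
Proof.
move=> [ys _]; rewrite {1}ys dotp_sumr; apply: eq_bigr => p _; exact: dotpZr.
Qed.

Lemma KI_decomp s y x : circ_ok x -> decomp_of s y -> 2 * dotp x y <= l1 y.
Proof.
move=> ok D; rewrite (dotp_decomp x D) (l1_decomp D) mulr_sumr.
rewrite big_seq [X in _ <= X]big_seq; apply: ler_sum => p ps.
have [h1 [h2 _]] := D.2 p ps.
by rewrite mulrCA ler_wpM2l // l1_circ // ok.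
Qed.

Lemma KI (TU : totally_unimodular M) x y :
  circ_ok x -> in_flows M y -> 2 * dotp x y <= l1 y.
Proof.
move=> ok fy; have [s D] := decomp TU (leqnn _) fy; exact: KI_decomp ok D.
Qed.

Lemma tight_decomp s y x : circ_ok x -> decomp_of s y -> 2 * dotp x y = l1 y ->
  forall p, p \in s -> 0 < p.1 -> 2 * dotp x p.2 = normsq p.2.
Proof.
move=> ok D E.
have H : \sum_(p <- s) p.1 * (normsq p.2 - 2 * dotp x p.2) = 0.
  rewrite big_seq (eq_bigr (fun p : R * 'rV[R]_n => p.1 * l1 p.2 - 2 * (p.1 * dotp x p.2))); last first.
    by move=> p ps; rewrite l1_circ; [ring | exact: (D.2 p ps).2.1].
  rewrite sumrB -big_seq -mulr_sumr -big_seq -(l1_decomp D) -(dotp_decomp x D).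
  by rewrite E subrr.
move/eqP: H; rewrite big_seq psumr_eq0 => [/allP A p ps p1|p ps]; last first.
  have [h1 [h2 _]] := D.2 p ps; apply: mulr_ge0 => //.
  by rewrite subr_ge0 ok.
have := A p ps; rewrite ps /= mulf_eq0 (gt_eqF p1) /= subr_eq0 => /eqP.
by move=> ->.
Qed.

End Decomp2.


Section V0.
Variables (R : realType) (m n : nat) (M : 'M[R]_(m, n)).

Lemma int_abs_le (z : int) : `|z%:~R : R| <= z%:~R * z%:~R.
Proof.
rewrite -intr_norm -intrM ler_int.
by have [h|h] := lerP 0 z; [rewrite ger0_norm //|rewrite ltr0_norm //]; nia.
Qed.

Lemma circ_in_lattice d : circuit_flow M d -> in_lattice M d.
Proof.
move=> [fd [pd _]]; split => // e.
case: (pd e) => [->|[->|->]]; [exists 0 | exists 1 | exists (-1)]; by rewrite ?rmorphN.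
Qed.

Lemma V0_le (x l : 'rV[R]_n) : (normsq x <= normsq (x - l)) = (2 * dotp x l <= normsq l).
Proof. by rewrite normsqB; apply/idP/idP => h; lra. Qed.

Lemma V0_circ_ok x : V0 M x -> circ_ok M x.
Proof. by move=> [_ H] d cd; rewrite -V0_le; apply: H; apply: circ_in_lattice. Qed.

Lemma l1_lattice l : in_lattice M l -> l1 l <= normsq l.
Proof.
move=> [_ H]; rewrite /l1 /normsq /dotp; apply: ler_sum => e _.
by have [z ->] := H e; apply: int_abs_le.
Qed.

Lemma circ_ok_V0 (TU : totally_unimodular M) x :
  in_flows M x -> circ_ok M x -> V0 M x.
Proof.
move=> fx ok; split => // l ll; rewrite V0_le.
apply: le_trans (l1_lattice ll); exact: (KI TU ok ll.1).
Qed.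

End V0.


Lemma sum_same_sign (R : realType) (I : finType) (P : pred I) (a : I -> R) :
  (forall i j, P i -> P j -> 0 <= a i * a j) ->
  `|\sum_(i | P i) a i| = \sum_(i | P i) `|a i|.
Proof.
move=> H.
case: (boolP [exists i, P i && (a i < 0)]) => [/existsP [i0 /andP [Pi0 ai0]]|N].
  have neg : forall j, P j -> a j <= 0.
    by move=> j Pj; have := H i0 j Pi0 Pj; nra.
  rewrite ler0_norm; last by apply: sumr_le0.
  rewrite -sumrN; apply: eq_bigr => j Pj; rewrite ler0_norm //; exact: neg.
have pos : forall j, P j -> 0 <= a j.
  move=> j Pj; rewrite leNgt; apply/negP => aj; move/existsP: N; apply.
  by exists j; rewrite Pj aj.
rewrite ger0_norm; last by apply: sumr_ge0.
by apply: eq_bigr => j Pj; rewrite ger0_norm //; apply: pos.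
Qed.

Lemma norm_add_lt (R : realType) (a b : R) : a * b < 0 -> `|a + b| < `|a| + `|b|.
Proof.
move=> h.
case: (normr_case a) => [[-> ha]|[-> ha]]; case: (normr_case b) => [[-> hb]|[-> hb]];
  case: (normr_case (a + b)) => [[-> hab]|[-> hab]]; nra.
Qed.

Section Face.
Variables (R : realType) (m n : nat) (M : 'M[R]_(m, n)).
Hypothesis TU : totally_unimodular M.
Variables (F : 'rV[R]_n -> Prop) (cF : 'rV[R]_n) (bF : R).
Hypothesis Hle : forall x, V0 M x -> dotp cF x <= bF.
Hypothesis HF : forall x, F x <-> (V0 M x /\ dotp cF x = bF).
Variable x1 : 'rV[R]_n.
Hypothesis Fx1 : F x1.

Definition code := {ffun 'I_n -> 'I_3}.
Definition dec (c : code) : 'rV[R]_n :=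
  \row_e (match nat_of_ord (c e) with 0 => 0 | 1 => 1 | _ => -1 end).

Lemma dec_surj (d : 'rV[R]_n) : (forall e, pm1 (d 0 e)) -> exists c, dec c = d.
Proof.
move=> pd.
exists [ffun e => if d 0 e == 0 then ord0 else if d 0 e == 1 then inord 1 else inord 2].
apply/rowP => e; rewrite !mxE ffunE.
case: (pd e) => [->|[->|->]]; rewrite ?eqxx //.
  by rewrite oner_eq0 inordK.
have h : (-1 : R) != 1 by apply/eqP; lra.
by rewrite oppr_eq0 oner_eq0 (negPf h) inordK.
Qed.

Definition Uc : {set code} := [set c | `[< Ucirc M F (dec c) >]].

Lemma UcP c : reflect (Ucirc M F (dec c)) (c \in Uc).
Proof. by rewrite inE; apply: asboolP. Qed.

Lemma Ucirc_dec (g : 'rV[R]_n) : Ucirc M F g -> exists2 c, c \in Uc & dec c = g.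
Proof.
move=> U; have [c E] := dec_surj U.1.2.1; exists c => //.
by apply/UcP; rewrite E.
Qed.

Lemma F_V0 (x : 'rV[R]_n) : F x -> V0 M x. Proof. by move/HF => []. Qed.

Lemma Uc_circ c : c \in Uc -> circuit_flow M (dec c).
Proof. by move/UcP => []. Qed.

Lemma Uc_tight c (x : 'rV[R]_n) : c \in Uc -> F x -> 2 * dotp x (dec c) = normsq (dec c).
Proof. by move/UcP => [_ H] /H []. Qed.

Lemma sign_cons c c' e : c \in Uc -> c' \in Uc -> 0 <= dec c 0 e * dec c' 0 e.
Proof.
move=> cU c'U; rewrite leNgt; apply/negP => neg.
set g := dec c in neg *; set g' := dec c' in neg *.
have cg := Uc_circ cU; have cg' := Uc_circ c'U.
have ok := V0_circ_ok (F_V0 Fx1).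
have fl : in_flows M (g + g') by rewrite /in_flows mulmxDl cg.1 cg'.1 addr0.
have := KI TU ok fl.
rewrite dotpDr mulrDr (Uc_tight cU Fx1) (Uc_tight c'U Fx1) -(l1_circ cg) -(l1_circ cg').
suff : l1 (g + g') < l1 g + l1 g' by lra.
rewrite /l1 -big_split /= -subr_gt0 -sumrB (bigD1 e) //=.
apply: ltr_pwDl.
  have : (g + g') 0 e = g 0 e + g' 0 e by rewrite mxE.
  move=> ->; rewrite subr_gt0; exact: norm_add_lt.
apply: sumr_ge0 => i _.
have : (g + g') 0 i = g 0 i + g' 0 i by rewrite mxE.
move=> ->; rewrite subr_ge0; exact: ler_normD.
Qed.

Definition w : 'rV[R]_n := \sum_(c in Uc) dec c.

Lemma w_entry e : w 0 e = \sum_(c in Uc) dec c 0 e.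
Proof. by rewrite summxE. Qed.

Lemma w_abs e : `|w 0 e| = \sum_(c in Uc) `|dec c 0 e|.
Proof.
rewrite w_entry sum_same_sign // => c c' cU c'U; exact: sign_cons.
Qed.

Lemma w_flow : in_flows M w.
Proof.
rewrite /in_flows /w mulmx_suml big1 // => c cU; exact: (Uc_circ cU).1.
Qed.

Lemma l1_w : l1 w = \sum_(c in Uc) normsq (dec c).
Proof.
rewrite /l1 (eq_bigr _ (fun e _ => w_abs e)) exchange_big /=.
apply: eq_bigr => c cU; rewrite -(l1_circ (Uc_circ cU)) //.
Qed.

Lemma tight_w (x : 'rV[R]_n) : F x -> 2 * dotp x w = l1 w.
Proof.
move=> Fx; rewrite l1_w /w dotp_sumr mulr_sumr; apply: eq_bigr => c cU.
exact: Uc_tight.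
Qed.

Lemma phiS_w e : e \in phiS M F -> 1 <= `|w 0 e|.
Proof.
rewrite inE => /asboolP [g [U ge]].
have [c cU E] := Ucirc_dec U.
rewrite w_abs (bigD1 c) //=.
have -> : `|dec c 0 e| = 1.
  rewrite E; case: (U.1.2.1 e) ge => [->|[->|->]]; rewrite ?eqxx ?normr1 ?normrN1 //.
rewrite lerDl; apply: sumr_ge0 => i _; exact: normr_ge0.
Qed.

Lemma phiS_out e : e \notin phiS M F -> forall c, c \in Uc -> dec c 0 e = 0.
Proof.
move=> eS c cU; apply/eqP/negPn/negP => ne; move/negP: eS; apply.
by rewrite inE; apply/asboolP; exists (dec c); split => //; apply/UcP.
Qed.

Definition BU : 'M[R]_(#|{: code}|, n) :=
  \matrix_(i, e) (if (enum_val i : code) \in Uc then dec (enum_val i) 0 e else 0).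

Lemma dec_sub c : c \in Uc -> (dec c <= BU)%MS.
Proof.
move=> cU; apply: (eq_row_sub (enum_rank c)); apply/rowP => e.
by rewrite !mxE enum_rankK cU.
Qed.

Lemma w_sub : (w <= BU)%MS.
Proof. by apply: summx_sub => c cU; apply: dec_sub. Qed.

Lemma norm_pm (a b : R) : `|a| <= `|b| -> `|b + a| + `|b - a| = 2 * `|b|.
Proof.
move=> h.
case: (normr_case a) => [[ea ha]|[ea ha]]; case: (normr_case b) => [[eb hb]|[eb hb]];
  rewrite ea eb in h *;
  case: (normr_case (b + a)) => [[-> hab]|[-> hab]];
  case: (normr_case (b - a)) => [[-> hab']|[-> hab']]; lra.
Qed.

Lemma abs_le_l1 (z : 'rV[R]_n) e : `|z 0 e| <= l1 z.
Proof.
rewrite /l1 (bigD1 e) //= lerDl; apply: sumr_ge0 => i _; exact: normr_ge0.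
Qed.

Lemma span_S (z : 'rV[R]_n) :
  in_flows M z -> supp z \subset phiS M F -> (z <= BU)%MS.
Proof.
move=> fz sz.
set t := (1 + l1 z)^-1.
have l0 := l1_ge0 z.
have t0 : 0 < t by rewrite invr_gt0; lra.
have tl : t * l1 z <= 1.
  rewrite /t mulrC -(@ler_pM2r _ (1 + l1 z)) ?mulfVK ?mul1r; try lra.
have small : forall e, `|t * z 0 e| <= `|w 0 e|.
  move=> e; case: (boolP (e \in phiS M F)) => eS.
    apply: le_trans (phiS_w eS); rewrite normrM (gtr0_norm t0).
    apply: le_trans tl; apply: ler_wpM2l; [lra | exact: abs_le_l1].
  have -> : z 0 e = 0.
    apply/eqP/negPn/negP => ze; move/negP: eS; apply.
    by apply: (subsetP sz); rewrite inE.
  by rewrite mulr0 normr0.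
set yp := w + t *: z; set ym := w - t *: z.
have fyp : in_flows M yp by rewrite /in_flows mulmxDl w_flow -scalemxAl fz scaler0 addr0.
have fym : in_flows M ym by rewrite /in_flows mulmxBl w_flow -scalemxAl fz scaler0 subr0.
have l1sum : l1 yp + l1 ym = 2 * l1 w.
  rewrite /l1 -big_split mulr_sumr /=; apply: eq_bigr => e _.
  by rewrite !mxE norm_pm // -mulNr.
have [s D] := decomp TU (leqnn _) fyp.
have tightp : forall x, F x -> 2 * dotp x yp = l1 yp.
  move=> x Fx; have ok := V0_circ_ok (F_V0 Fx).
  have h1 := KI TU ok fyp; have h2 := KI TU ok fym.
  have h3 := tight_w Fx.
  have : dotp x yp + dotp x ym = 2 * dotp x w.
    by rewrite /yp /ym (dotpDr x w (t *: z)) (dotpBr x w (t *: z)); ring.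
  lra.
have Hs : forall p, p \in s -> 0 < p.1 -> (p.2 <= BU)%MS.
  move=> p ps p1.
  have U : Ucirc M F p.2.
    split; first exact: (D.2 p ps).2.1.
    move=> x Fx; split; first exact: (F_V0 Fx).1.
    exact: (tight_decomp (V0_circ_ok (F_V0 Fx)) D (tightp x Fx) ps p1).
  by have [c cU <-] := Ucirc_dec U; apply: dec_sub.
have ypsub : (yp <= BU)%MS.
  rewrite D.1 big_seq; apply: summx_sub => p ps.
  have [p0 _] := D.2 p ps.
  case: (eqVneq p.1 0) => [->|pn]; first by rewrite scale0r sub0mx.
  by apply: scalemx_sub; apply: Hs => //; rewrite lt_def pn.
have -> : z = t^-1 *: (yp + (-1) *: w).
  by rewrite scaleN1r /yp addrAC subrr add0r scalerA mulVf ?scale1r // gt_eqF.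
by apply: scalemx_sub; apply: addmx_sub => //; apply: scalemx_sub; exact: w_sub.
Qed.

Lemma row_BU i : row i BU = if (enum_val i : code) \in Uc then dec (enum_val i) else 0.
Proof. by apply/rowP => e; rewrite !mxE; case: ifP => //; rewrite mxE. Qed.

Lemma supp_dec_S c : c \in Uc -> supp (dec c) \subset phiS M F.
Proof.
move=> cU; apply/subsetP => e; rewrite inE => ne; apply/negPn/negP => eS.
by move/eqP: ne; apply; apply: phiS_out.
Qed.

Lemma BU_ker : BU *m M^T = 0.
Proof.
apply/row_matrixP => i; rewrite row_mul row_BU row0.
by case: ifP => [cU|_]; [exact: (Uc_circ cU).1 | rewrite mul0mx].
Qed.

Lemma rank_BU : \rank BU = genus M (phiS M F) (phiEps M F).
Proof.
rewrite /genus colsubS_trE.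
set S := phiS M F; set K0 := kermx (Pm R S *m M^T).
rewrite -(mxrankMfree K0 (Pm_free R S)).
apply/eqP; rewrite eqn_leq; apply/andP; split; apply: mxrankS; apply/row_subP => i.
  rewrite row_BU; case: ifP => [cU|_]; last by rewrite sub0mx.
  set c := enum_val i in cU *.
  rewrite -(supp_PtP (supp_dec_S cU)); apply: submxMr.
  apply/sub_kermxP; rewrite mulmxA supp_PtP ?supp_dec_S //.
  exact: (Uc_circ cU).1.
rewrite row_mul; apply: span_S; last exact: supp_uP.
rewrite /in_flows -mulmxA; apply/sub_kermxP; exact: row_sub.
Qed.

Definition mid (x y : 'rV[R]_n) : 'rV[R]_n := 2^-1 *: (x + y).

Lemma dotp_mid (x y d : 'rV[R]_n) : dotp (mid x y) d = 2^-1 * (dotp x d + dotp y d).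
Proof. by rewrite /mid dotpZl dotpDl. Qed.

Lemma F_mid x y : F x -> F y -> F (mid x y).
Proof.
move=> /HF [Vx cx] /HF [Vy cy]; apply/HF; split.
  apply: circ_ok_V0 => //.
    by rewrite /in_flows /mid -scalemxAl mulmxDl Vx.1 Vy.1 addr0 scaler0.
  move=> d cd; rewrite dotp_mid.
  have := V0_circ_ok Vx cd; have := V0_circ_ok Vy cd; lra.
by rewrite /mid dotpZr dotpDr cx cy; field.
Qed.

Lemma xstar_seq (s : seq code) : exists x, F x /\
  forall c, c \in s -> circuit_flow M (dec c) -> c \notin Uc ->
    2 * dotp x (dec c) < normsq (dec c).
Proof.
elim: s => [|c s [x [Fx Hx]]]; first by exists x1; split.
case: (classic (circuit_flow M (dec c) /\ c \notin Uc)) => [[cc cU]|nb]; last first.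
  exists x; split => // c' ; rewrite inE => /orP [/eqP -> cc cU|]; last exact: Hx.
  by exfalso; apply: nb.
have [xc [Fxc sc]] : exists xc, F xc /\ 2 * dotp xc (dec c) < normsq (dec c).
  apply: NNPP => H; move/negP: cU; apply; apply/UcP; split => // y Fy.
  split; first exact: (F_V0 Fy).1.
  apply: NNPP => ne; apply: H; exists y; split => //.
  by rewrite lt_def (V0_circ_ok (F_V0 Fy) cc) andbT; apply/eqP => E; apply: ne; rewrite E.
exists (mid x xc); split; first exact: F_mid.
move=> c'; rewrite inE dotp_mid => /orP [/eqP -> _ _|c's cc' c'U].
  by have := V0_circ_ok (F_V0 Fx) cc; lra.
by have := Hx c' c's cc' c'U; have := V0_circ_ok (F_V0 Fxc) cc'; lra.
Qed.

Definition Dm : 'M[R]_n := kermx (col_mx M BU)^T.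

Lemma BUT_entry (v : 'rV[R]_n) i :
  (v *m BU^T) 0 i = if (enum_val i : code) \in Uc then dotp v (dec (enum_val i)) else 0.
Proof.
rewrite mxE; case: ifP => cU.
  by apply: eq_bigr => e _; rewrite !mxE cU.
by rewrite big1 // => e _; rewrite !mxE cU mulr0.
Qed.

Lemma D_char (v : 'rV[R]_n) :
  (v <= Dm)%MS <-> in_flows M v /\ forall c, c \in Uc -> dotp v (dec c) = 0.
Proof.
rewrite /Dm; split.
  move/sub_kermxP; rewrite tr_col_mx mul_mx_row => /eqP.
  rewrite row_mx_eq0 => /andP [/eqP h1 /eqP h2]; split => // c cU.
  have := BUT_entry v (enum_rank c); rewrite h2 enum_rankK cU mxE.
  by move=> ->.
move=> [h1 h2]; apply/sub_kermxP; rewrite tr_col_mx mul_mx_row h1.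
have -> : v *m BU^T = 0.
  apply/rowP => i; rewrite BUT_entry mxE; case: ifP => // cU; exact: h2.
by rewrite row_mx0.
Qed.

Lemma claimA xs : F xs -> forall x, F x -> (x - xs <= Dm)%MS.
Proof.
move=> Fxs x Fx; apply/D_char; split.
  by rewrite /in_flows mulmxBl (F_V0 Fx).1 (F_V0 Fxs).1 subrr.
move=> c cU; rewrite dotpBl.
have := Uc_tight cU Fx; have := Uc_tight cU Fxs.
rewrite (dotpC x) (dotpC xs); lra.
Qed.

Lemma claimB xs : F xs ->
  (forall c, circuit_flow M (dec c) -> c \notin Uc -> 2 * dotp xs (dec c) < normsq (dec c)) ->
  forall U' : 'M[R]_n, (forall x, F x -> (x - xs <= U')%MS) -> (Dm <= U')%MS.
Proof.
move=> Fxs Hxs U' HU; apply/row_subP => i.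
set v := row i Dm.
have [fv ov] := (D_char v).1 (row_sub i Dm).
have sig : forall s : seq code, exists2 sg : R, 0 < sg & forall c, c \in s ->
    circuit_flow M (dec c) -> c \notin Uc ->
    2 * dotp xs (dec c) + 2 * sg * `|dotp v (dec c)| <= normsq (dec c).
  elim => [|c s [s0 s0p H0]]; first by exists 1.
  case: (classic (circuit_flow M (dec c) /\ c \notin Uc)) => [[cc cU]|nb]; last first.
    exists s0 => // c'; rewrite inE => /orP [/eqP -> cc cU|]; last exact: H0.
    by exfalso; apply: nb.
  set a := `|dotp v (dec c)|.
  have a0 : 0 <= a by apply: normr_ge0.
  set sl := normsq (dec c) - 2 * dotp xs (dec c).
  have sl0 : 0 < sl by rewrite /sl subr_gt0; apply: Hxs.
  set sc := sl / (2 * a + 1).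
  have scE : sc * (2 * a + 1) = sl by rewrite /sc mulfVK //; apply/eqP; lra.
  have sc0 : 0 < sc by rewrite /sc divr_gt0 //; lra.
  exists (Num.min s0 sc); first by rewrite lt_min s0p sc0.
  have m1 : Num.min s0 sc <= s0 by rewrite ge_min lexx.
  have m2 : Num.min s0 sc <= sc by rewrite ge_min lexx orbT.
  move=> c'; rewrite inE => /orP [/eqP -> _ _|c's cc' c'U].
    rewrite -/a; have : 2 * Num.min s0 sc * a <= 2 * sc * a.
      by apply: ler_wpM2r => //; lra.
    rewrite /sl in scE; nra.
  have := H0 c' c's cc' c'U.
  have a'0 : 0 <= `|dotp v (dec c')| by apply: normr_ge0.
  have : 2 * Num.min s0 sc * `|dotp v (dec c')| <= 2 * s0 * `|dotp v (dec c')|.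
    by apply: ler_wpM2r => //; lra.
  lra.
have [sg sg0 Hsg] := sig (enum {: code}).
have okpm : forall sgn : R, sgn = 1 \/ sgn = -1 -> V0 M (xs + (sgn * sg) *: v).
  move=> sgn hs; apply: circ_ok_V0 => //.
    by rewrite /in_flows mulmxDl (F_V0 Fxs).1 -scalemxAl fv scaler0 addr0.
  move=> d cd; have [c E] := dec_surj cd.2.1; rewrite -E in cd *.
  rewrite dotpDl dotpZl.
  case: (boolP (c \in Uc)) => cU.
    rewrite ov // mulr0 addr0.
    exact: (V0_circ_ok (F_V0 Fxs) cd).
  have := Hsg c (mem_enum _ _) cd cU.
  case: (normr_case (dotp v (dec c))) => [[-> h]|[-> h]]; case: hs => ->; nra.
have Vp := okpm 1 (or_introl erefl).
have Vm := okpm (-1) (or_intror erefl).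
have Fp : F (xs + sg *: v).
  rewrite mul1r in Vp; apply/HF; split => //.
  have := Hle Vp; have := Hle Vm; have := (HF xs).1 Fxs => [[_ h]].
  rewrite !dotpDr !dotpZr h; nra.
have := HU _ Fp; rewrite addrC addKr => /(scalemx_sub sg^-1).
by rewrite scalerA mulVf ?gt_eqF // scale1r.
Qed.

Lemma cap0 : \rank (M :&: BU)%MS = 0%N.
Proof.
apply/eqP; rewrite mxrank_eq0; apply/eqP/row_matrixP => i; rewrite row0.
set v := row i (M :&: BU)%MS.
have vM : (v <= M)%MS := submx_trans (row_sub i _) (capmxSl M BU).
have vB : (v <= BU)%MS := submx_trans (row_sub i _) (capmxSr M BU).
have vk : v *m M^T = 0 by case/submxP: vB => u ->; rewrite -mulmxA BU_ker mulmx0.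
have vv : v *m v^T = 0.
  case/submxP: vM => u vE.
  have E : M *m v^T = (v *m M^T)^T by rewrite trmx_mul trmxK.
  by rewrite {1}vE -mulmxA E vk trmx0 mulmx0.
apply: normsq_eq0; by rewrite /normsq dotpE vv mxE.
Qed.

Lemma face_codim : codim_in_flows M F (genus M (phiS M F) (phiEps M F)).
Proof.
have [xs [Fxs Hxs]] := xstar_seq (enum {: code}).
exists (\rank Dm); split.
  exists xs => //; split.
    by exists Dm; split => //; exact: claimA.
  move=> U' HU; apply: mxrankS; apply: (claimB Fxs) => // c cc cU.
  by apply: Hxs => //; exact: mem_enum.
rewrite -rank_BU /dim_flows /Dm !mxrank_ker !mxrank_tr.
have H := mxrank_sum_cap M BU; rewrite cap0 addsmxE addn0 in H.
rewrite H; have := rank_leq_col (col_mx M BU); rewrite -H => Hle'.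
rewrite H in Hle' *; lia.
Qed.

End Face.

Theorem mainTheorem18 (R : realType) (m n : nat) (M : 'M[R]_(m, n)) :
  totally_unimodular M ->
  forall F : 'rV[R]_n -> Prop,
    is_face (V0 M) F -> (exists x, F x) ->
    codim_in_flows M F (genus M (phiS M F) (phiEps M F)).
Proof.
move=> TU F [c [b [H1 H2]]] [x1 Fx1].
exact: (@face_codim R m n M TU F c b H1 H2 x1 Fx1).
Qed.
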